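(* Let $\lambda_{\max}>1$ and let $F:[0,\lambda_{\max}]\to\mathbb{R}_+$ be a continuously differentiable strictly concave function with $F(0)=0$, such that $F(x)<F^\star$ for all $x\in[0,1)$ and $F'(1)>0$. Suppose moreover that $F$ is thrice continuously differentiable on $(1,\lambda_{\max}]$, that $\lim_{x\to1^+}F''(x)<0$, and that $\sup_{x>1}|F^{(3)}(x)|\le M$ for some $M<\infty$. Then there exist $C_1,\varepsilon_0>0$ (depending on $F$) such that $q^\star(\varepsilon)\ge C_1/\sqrt{\varepsilon}$ for all $\varepsilon\in(0,\varepsilon_0]$.
   Context: A control policy is a function $\lambda:\mathbb{Z}_+\to[0,\lambda_{\max}]$; it defines a continuous-time birth–death chain on $\mathbb{Z}_+$ with rate $\lambda(q)$ from $q$ to $q+1$ and rate $1$ from $q$ to $q-1$ ($q\ge1$). Let $\mathcal S$ be the set of states reachable from $0$. The policy is stable if $\sum_{i\in\mathcal S}\prod_{q=0}^{i}\lambda(q)<\infty$ (positive recurrence on $\mathcal S$); then $\pi$ is its stationary distribution and $\bar q\sim\pi$. $F^\star=\sup\{\mathbb{E}_\alpha[F(X)]:\alpha$ a probability measure on $[0,\lambda_{\max}]$, $X\sim\alpha$, $\mathbb{E}_\alpha[X]\le1\}$; regret $R(\lambda)=F^\star-\mathbb{E}_\pi[F(\lambda(\bar q))]$; $q^\star(\varepsilon)=\inf\{\mathbb{E}_\pi[\bar q]:\lambda$ stable, $R(\lambda)\le\varepsilon\}$. *)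

(* Defs.v *)
From HB Require Import structures.
From mathcomp Require Import all_boot all_order all_algebra.
From mathcomp Require Import all_classical all_reals all_analysis.
Set Implicit Arguments. Unset Strict Implicit. Unset Printing Implicit Defensive.
Import Order.TTheory GRing.Theory Num.Theory.
Import numFieldNormedType.Exports.
Local Open Scope classical_set_scope.
Local Open Scope ring_scope.

Section Defs.
Variable R : realType.

Definition Icc0 (lmax : R) : set R := `[0, lmax]%classic.
Definition Ioc1 (lmax : R) : set R := `]1, lmax]%classic.

(* d is the derivative of f at x, relative to the set A (one-sided at
   boundary points of an interval A): the difference quotient tends to d
   as y -> x within A \ {x}. *)
Definition has_deriv_within (A : set R) (f : R -> R) (x d : R) : Prop :=
  (fun y => (f y - f x) / (y - x)) @ within (A `\ x) (nbhs x) --> d.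

Definition strictly_concave_on (A : set R) (f : R -> R) : Prop :=
  forall x y t, A x -> A y -> x != y -> 0 < t < 1 ->
    t * f x + (1 - t) * f y < f (t * x + (1 - t) * y).

(* F^* : sup of E_alpha[F(X)] over probability measures alpha on [0,lmax]
   (probability measures on R giving mass 1 to [0,lmax]) with E[X] <= 1 *)
Definition Fstar (lmax : R) (F : R -> R) : \bar R :=
  ereal_sup [set (\int[P]_(x in Icc0 lmax) (F x)%:E)%E
            | P in [set P : probability R R |
                      P (Icc0 lmax) = 1%E /\
                      (\int[P]_(x in Icc0 lmax) x%:E <= 1%:E)%E]].

Definition policy (lmax : R) (lam : nat -> R) : Prop :=
  forall q, 0 <= lam q <= lmax.

(* states reachable from 0 *)
Definition reach (lam : nat -> R) (i : nat) : bool :=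
  all (fun q => 0 < lam q) (iota 0 i).

Definition stable (lam : nat -> R) : Prop :=
  (\sum_(0 <= i <oo) (if reach lam i then \prod_(0 <= q < i.+1) lam q else 0)%:E
     < +oo)%E.

(* pi is a stationary distribution (pi Q = 0) of the birth-death chain with
   birth rates lam and death rate 1, supported on the reachable set *)
Definition stationary (lam : nat -> R) (pi : nat -> R) : Prop :=
  [/\ forall i, 0 <= pi i,
      (\sum_(0 <= i <oo) (pi i)%:E = 1%:E)%E,
      forall i, ~~ reach lam i -> pi i = 0 &
      forall i, pi i * (lam i + (if (0 < i)%N then 1 else 0)) =
                (if (0 < i)%N then pi i.-1 * lam i.-1 else 0) + pi i.+1].

Definition mean_queue (pi : nat -> R) : \bar R :=
  (\sum_(0 <= i <oo) (pi i * i%:R)%:E)%E.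

Definition regret (lmax : R) (F : R -> R) (lam pi : nat -> R) : \bar R :=
  (Fstar lmax F - \sum_(0 <= i <oo) (pi i * F (lam i))%:E)%E.

Definition qstar (lmax : R) (F : R -> R) (eps : R) : \bar R :=
  ereal_inf [set mean_queue pi | pi in
     [set pi | exists lam, [/\ policy lmax lam, stable lam, stationary lam pi &
                                (regret lmax F lam pi <= eps%:E)%E]]].
End Defs.

(* Main.v *)
Require Import Defs.
From HB Require Import structures.
From mathcomp Require Import all_boot all_order all_algebra.
From mathcomp Require Import all_classical all_reals all_analysis.
From mathcomp Require Import ring lra.
From mathcomp Require Import measurable_realfun.
Import Order.TTheory GRing.Theory Num.Theory.
Import numFieldNormedType.Exports.
Local Open Scope classical_set_scope.
Local Open Scope ring_scope.

Section H.
Variable R : realType.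

Lemma within_epsP (A : set R) (f : R -> R) x l :
  f @ within A (nbhs x) --> l <->
  (forall e, 0 < e -> exists2 d, 0 < d & forall y, A y -> `|x - y| < d -> `|l - f y| < e).
Proof.
split.
- move/cvgrPdist_lt => H e e0.
  have := H e e0; rewrite /= /within /= => /nbhs_ballP [d d0 Hd].
  exists d => // y Ay xy; apply: (Hd y) => //.
- move=> H; apply/cvgrPdist_lt => e e0.
  have [d d0 Hd] := H e e0.
  change (nbhs x (fun t => A t -> `|l - f t| < e)).
  apply/nbhs_ballP; exists d => //= y.
  rewrite /ball /= => xy Ay; exact: Hd.
Qed.

Lemma deriv_eps (A : set R) f x d : has_deriv_within A f x d ->
  forall e, 0 < e -> exists2 del, 0 < del & forall y, A y -> y != x ->
    `|x - y| < del -> `|d - (f y - f x) / (y - x)| < e.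
Proof.
move/within_epsP => H e e0; have [del del0 Hd] := H e e0.
exists del => // y Ay yx xy; apply: Hd => //; split => //= /eqP; exact/negP.
Qed.

Lemma concave3 (lmax : R) (f : R -> R) (a b c : R) : strictly_concave_on (Icc0 lmax) f ->
  0 <= a -> a < b -> b < c -> c <= lmax ->
  (c - b) * f a + (b - a) * f c <= (c - a) * f b.
Proof.
move=> Hc a0 ab bc cl.
have ca : 0 < c - a by rewrite subr_gt0 (lt_trans ab bc).
have Aa : Icc0 lmax a by rewrite /Icc0 /= in_itv /= a0 /= (le_trans (ltW (lt_trans ab bc)) cl).
have Ac : Icc0 lmax c by rewrite /Icc0 /= in_itv /= cl (le_trans a0 (ltW (lt_trans ab bc))).
have ac : a != c by rewrite lt_eqF // (lt_trans ab bc).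
set t := (c - b) / (c - a).
have t01 : 0 < t < 1.
  apply/andP; split; first by rewrite divr_gt0 // subr_gt0.
  by rewrite ltr_pdivrMr // mul1r ltrD2l ltrN2.
have := Hc a c t Aa Ac ac t01.
have -> : t * a + (1 - t) * c = b by rewrite /t; field; rewrite gt_eqF.
move=> H.
have e1 : (c - a) * t = c - b by rewrite /t mulrC divfK // gt_eqF.
have e2 : (c - a) * (1 - t) = b - a by rewrite mulrBr mulr1 e1; ring.
have H2 : (c - a) * (t * f a + (1 - t) * f c) <= (c - a) * f b.
  by rewrite ler_pM2l // ltW.
have E : (c - b) * f a + (b - a) * f c = (c - a) * (t * f a + (1 - t) * f c).
  clear H2; clearbody t; by rewrite mulrDr !mulrA e1 e2.
by rewrite E.
Qed.

Lemma Icc0P (lmax x : R) : 0 <= x -> x <= lmax -> Icc0 lmax x.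
Proof. by move=> x0 xl; rewrite /Icc0 /= in_itv /= x0 xl. Qed.

Lemma tangent (lmax : R) (f : R -> R) (c d y : R) :
  strictly_concave_on (Icc0 lmax) f -> 0 <= c <= lmax ->
  has_deriv_within (Icc0 lmax) f c d -> 0 <= y <= lmax ->
  f y <= f c + d * (y - c).
Proof.
move=> Hc /andP[c0 cl] Hd /andP[y0 yl].
have [yc|yc|->] := ltgtP y c; last by rewrite subrr mulr0 addr0.
- rewrite leNgt; apply/negP => Hlt.
  have cy : 0 < c - y by rewrite subr_gt0.
  pose e := (f y - f c - d * (y - c)) / (c - y).
  have e0 : 0 < e by rewrite divr_gt0 // subr_gt0 -(ltrD2l (f c)) addrCA subrr addr0.
  have ee : e * (c - y) = f y - f c - d * (y - c) by rewrite /e divfK // gt_eqF.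
  have [del del0 Hdel] := deriv_eps _ _ _ _ Hd _ e0.
  pose m := Num.min del (c - y).
  have m0 : 0 < m by rewrite lt_min del0 cy.
  have md : m <= del by rewrite ge_min lexx.
  have my : m <= c - y by rewrite ge_min lexx orbT.
  pose z := c - m / 2.
  have yz : y < z by rewrite /z; lra.
  have zc : z < c by rewrite /z; lra.
  have Az : Icc0 lmax z by apply: Icc0P; lra.
  have zne : z != c by rewrite lt_eqF.
  have czd : `|c - z| < del by rewrite /z opprB addrC subrK ger0_norm; lra.
  have := Hdel z Az zne czd.
  have := concave3 _ _ _ _ _ Hc y0 yz zc cl.
  pose q := (f z - f c) / (z - c).
  have qq : q * (z - c) = f z - f c by rewrite /q divfK // lt_eqF // subr_lt0.
  rewrite -/q => Hconc; rewrite ltr_norml => /andP[Hq1 Hq2].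
  have h1 : 0 < (q - (d - e)) * (c - z) by apply: mulr_gt0; lra.
  have h2 : 0 < (q - (d - e)) * (c - z) * (c - y) by apply: mulr_gt0 => //; lra.
  nra.
- rewrite leNgt; apply/negP => Hlt.
  have cy : 0 < y - c by rewrite subr_gt0.
  pose e := (f y - f c - d * (y - c)) / (y - c).
  have e0 : 0 < e by rewrite divr_gt0 // subr_gt0 -(ltrD2l (f c)) addrCA subrr addr0.
  have ee : e * (y - c) = f y - f c - d * (y - c) by rewrite /e divfK // gt_eqF.
  have [del del0 Hdel] := deriv_eps _ _ _ _ Hd _ e0.
  pose m := Num.min del (y - c).
  have m0 : 0 < m by rewrite lt_min del0 cy.
  have md : m <= del by rewrite ge_min lexx.
  have my : m <= y - c by rewrite ge_min lexx orbT.
  pose z := c + m / 2.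
  have yz : z < y by rewrite /z; lra.
  have zc : c < z by rewrite /z; lra.
  have Az : Icc0 lmax z by apply: Icc0P; lra.
  have zne : z != c by rewrite gt_eqF.
  have czd : `|c - z| < del by rewrite /z opprD addNKr normrN ger0_norm; lra.
  have := Hdel z Az zne czd.
  have := concave3 _ _ _ _ _ Hc c0 zc yz yl.
  pose q := (f z - f c) / (z - c).
  have qq : q * (z - c) = f z - f c by rewrite /q divfK // gt_eqF // subr_gt0.
  rewrite -/q => Hconc; rewrite ltr_norml => /andP[Hq1 Hq2].
  have h1 : 0 < (d + e - q) * (z - c) by apply: mulr_gt0; lra.
  have h2 : 0 < (d + e - q) * (z - c) * (y - c) by apply: mulr_gt0 => //; lra.
  nra.
Qed.

Lemma deriv_cont (A : set R) (f : R -> R) :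
  (forall x, A x -> exists d, has_deriv_within A f x d) -> {within A, continuous f}.
Proof.
move=> H; apply/subspace_continuousP => x Ax.
have [d Hd] := H x Ax.
apply/within_epsP => e e0.
have [del del0 Hdel] := deriv_eps _ _ _ _ Hd _ ltr01.
have d1 : 0 < `|d| + 1 by rewrite ltr_wpDl.
exists (Num.min del (e / (`|d| + 1))); first by rewrite lt_min del0 divr_gt0.
move=> y Ay; rewrite lt_min => /andP[xy1 xy2].
have [->|yx] := eqVneq y x; first by rewrite subrr normr0.
have := Hdel y Ay yx xy1.
set q := (f y - f x) / (y - x) => Hq.
have qq : f x - f y = q * (x - y).
  by rewrite /q; field; rewrite subr_eq0.
have qb : `|q| <= `|d| + 1.
  have -> : q = (q - d) + d by rewrite subrK.
  rewrite (le_trans (ler_normD _ _)) // addrC lerD2l distrC ltW //.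
rewrite qq normrM.
apply: (le_lt_trans (ler_wpM2r (normr_ge0 _) qb)).
by rewrite -ltr_pdivlMl // mulrC.
Qed.

Lemma deriv_is_derive (A : set R) (f : R -> R) (x d rho : R) : 0 < rho ->
  (forall y, `|x - y| < rho -> A y) -> has_deriv_within A f x d ->
  is_derive x 1 f d.
Proof.
move=> rho0 HA Hd.
have H : (fun h => h^-1 *: ((f \o shift x) (h *: 1) - f x)) @ 0^' --> d.
  apply/within_epsP => e e0.
  have [del del0 Hdel] := deriv_eps _ _ _ _ Hd _ e0.
  exists (Num.min del rho); first by rewrite lt_min del0 rho0.
  move=> h /= h0; rewrite lt_min => /andP[h1 h2].
  rewrite sub0r normrN in h1 h2.
  have ex : x - (h + x) = - h by rewrite opprD addrCA subrr addr0.
  have Hy : A (h + x) by apply: HA; rewrite ex normrN.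
  have yx : h + x != x by rewrite -subr_eq0 addrK.
  have := Hdel (h + x) Hy yx.
  rewrite ex normrN addrK => /(_ h1).
  have -> : h%:A = h by rewrite /GRing.scale /= mulr1.
  by rewrite /GRing.scale /= mulrC.
apply: DeriveDef; first exact: (cvgP _ H).
exact: (cvg_lim _ H).
Qed.

Lemma Fstar_ge (lmax : R) (F : R -> R) : 1 <= lmax ->
  {within Icc0 lmax, continuous F} -> ((F 1)%:E <= Fstar lmax F)%E.
Proof.
move=> l1 cF.
have mD : measurable (Icc0 lmax) by exact: measurable_itv.
have D1 : Icc0 lmax 1 by apply: Icc0P.
apply: ereal_sup_ubound => /=.
exists (\d_(1:R) : probability R R).
  split.
  - by rewrite /= /dirac indicE mem_set.
  - rewrite integral_dirac //.
    by rewrite /= /dirac indicE mem_set // mul1e.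
rewrite integral_dirac //.
  by rewrite /= /dirac indicE mem_set // mul1e.
apply/measurable_EFinP; exact: subspace_continuous_measurable_fun.
Qed.

Lemma step_c (lmax : R) (F F1 : R -> R) (L s : R) :
  strictly_concave_on (Icc0 lmax) F ->
  (forall x, 0 <= x <= lmax -> has_deriv_within (Icc0 lmax) F x (F1 x)) ->
  0 < s -> 1 + s <= lmax -> F1 (1 + s / 2) <= F1 1 + L / 2 * (s / 2) ->
  F (1 + s) <= F 1 + F1 1 * s + L / 8 * s ^+ 2.
Proof.
move=> Hc HF s0 sl h3.
have a1 : 0 <= 1 + s / 2 <= lmax by apply/andP; split; lra.
have a2 : 0 <= 1 + s <= lmax by apply/andP; split; lra.
have a3 : 0 <= (1:R) <= lmax by apply/andP; split; lra.
have h1 := tangent lmax F (1 + s / 2) (F1 (1 + s / 2)) (1 + s) Hc a1 (HF _ a1) a2.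
have h2 := tangent lmax F 1 (F1 1) (1 + s / 2) Hc a3 (HF _ a3) a1.
have h4 : F1 (1 + s / 2) * (s / 2) <= (F1 1 + L / 2 * (s / 2)) * (s / 2).
  by rewrite ler_pM2r //; lra.
have e1 : 1 + s - (1 + s / 2) = s / 2 by field.
have e2 : 1 + s / 2 - 1 = s / 2 by field.
rewrite e1 in h1; rewrite e2 in h2.
have e3 : (F1 1 + L / 2 * (s / 2)) * (s / 2) = F1 1 * (s / 2) + L / 8 * s ^+ 2 by field.
rewrite e3 in h4.
move: h1 h2 h4; clear; set A := F1 (1 + s / 2) * (s / 2); set B := F1 1 * (s / 2).
have -> : F1 1 * s = B + B by rewrite /B -mulrDr; congr (_ * _); field.
lra.
Qed.

Lemma step_d (lmax : R) (F F1 : R -> R) (K0 del r : R) :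
  strictly_concave_on (Icc0 lmax) F ->
  0 < K0 -> 0 < del -> 1 + del < r -> r <= lmax ->
  F (1 + del) <= F 1 + F1 1 * del - K0 * del ^+ 2 ->
  F r <= F 1 + F1 1 * (r - 1) - K0 * del * (r - 1).
Proof.
move=> Hc K00 del0 rd rl h2.
have h1 := concave3 lmax F 1 (1 + del) r Hc ler01 ltac:(lra) rd rl.
have r10 : 0 < r - 1 by lra.
have h3 : (r - 1) * F (1 + del) <= (r - 1) * (F 1 + F1 1 * del - K0 * del ^+ 2).
  by rewrite ler_pM2l.
rewrite -(ler_pM2l del0).
move: h1 h3; clear.
set a := F 1; set b := F1 1; set X := F (1 + del); set Y := F r.
move=> h1 h3.
have e : r - (1 + del) = r - 1 - del by ring.
rewrite e in h1.
have E1 : (1 + del - 1) = del by ring.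
rewrite E1 in h1.
have E2 : del * (a + b * (r - 1) - K0 * del * (r - 1)) =
   (r - 1) * (a + b * del - K0 * del ^+ 2) - (r - 1 - del) * a by ring.
rewrite E2; lra.
Qed.
Definition wpos (r : R) : R := if r <= 1 then 0 else (r - 1) ^+ 2.

Lemma quad_bound (lmax : R) (F F1 F2 : R -> R) (L : R) : 1 < lmax ->
  strictly_concave_on (Icc0 lmax) F ->
  (forall x, 0 <= x <= lmax -> has_deriv_within (Icc0 lmax) F x (F1 x)) ->
  {within (Icc0 lmax), continuous F1} ->
  (forall x, 1 < x <= lmax -> has_deriv_within (Ioc1 lmax) F1 x (F2 x)) ->
  F2 x @[x --> 1^'+] --> L -> L < 0 ->
  exists2 k, 0 < k & forall r, 0 <= r <= lmax ->
    F r <= F 1 + F1 1 * (r - 1) - k * wpos r.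
Proof.
move=> l1 Hc HF cF1 HF1 HF2 L0.
have /within_epsP HL := HF2.
have [d0 d00 Hd0] : exists2 d0, 0 < d0 & forall y, 1 < y -> `|1 - y| < d0 -> F2 y < L / 2.
  have [d0 d00 Hd0] := HL (- L / 2) ltac:(lra).
  exists d0 => // y y1 yd; have := Hd0 y y1 yd.
  rewrite ltr_norml => /andP[h1 h2]; lra.
pose del := Num.min (d0 / 2) (lmax - 1).
have del0 : 0 < del by rewrite lt_min; apply/andP; split; lra.
have deld : del < d0 by rewrite gt_min; apply/orP; left; lra.
have dell : del <= lmax - 1 by rewrite ge_min lexx orbT.
have Hb : forall c, 1 < c -> c <= 1 + del -> F1 c <= F1 1 + L / 2 * (c - 1).
  move=> c c1 cd.
  have [xi xiI Exi] : exists2 xi, xi \in `]1, c[ & F1 c - F1 1 = F2 xi * (c - 1).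
    apply: MVT => //.
      move=> x; rewrite in_itv /= => /andP[x1 xc].
      apply: (@deriv_is_derive (Ioc1 lmax) F1 x (F2 x) (Num.min (x - 1) (lmax - x))).
      - by rewrite lt_min; apply/andP; split; lra.
      - move=> y; rewrite lt_min => /andP[h1 h2].
        rewrite /Ioc1 /= in_itv /=.
        move: h1 h2; rewrite !ltr_norml => /andP[h1 h1'] /andP[h2 h2'].
        apply/andP; split; lra.
      - apply: HF1; apply/andP; split; lra.
    have cl : c <= lmax by lra.
    apply: (continuous_subspaceW _ cF1) => y /=; rewrite !in_itv /= => /andP[h1 h2].
    apply: Icc0P; [exact: le_trans ler01 h1 | exact: le_trans h2 cl].
  move: xiI; rewrite in_itv /= => /andP[xi1 xic].
  have : F2 xi < L / 2 by apply: Hd0 => //; rewrite ltr_norml; apply/andP; split; lra.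
  move=> h; have c10 : 0 < c - 1 by lra.
  have : F2 xi * (c - 1) <= L / 2 * (c - 1) by rewrite ler_pM2r // ltW.
  lra.
have Hcc : forall s, 0 < s -> s <= del -> F (1 + s) <= F 1 + F1 1 * s + L / 8 * s ^+ 2.
  move=> s s0 sd; apply: (step_c lmax F F1 L s Hc HF s0).
    have := le_trans sd dell; lra.
  have e2 : 1 + s / 2 - 1 = s / 2 by rewrite addrAC subrr add0r.
  rewrite -{2}e2; apply: Hb.
    by rewrite ltrDl divr_gt0.
  by rewrite lerD2l ler_pdivrMr // (le_trans sd) // ler_peMr // ?ler1n // ltW.
pose K0 := - L / 8.
have K00 : 0 < K0 by rewrite /K0; lra.
pose k := K0 * del / (lmax - 1).
have k0 : 0 < k by rewrite /k divr_gt0 ?mulr_gt0 //; lra.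
have kK : k <= K0.
  rewrite /k ler_pdivrMr ?subr_gt0 // ler_pM2l //.
exists k => // r /andP[r0 rl].
rewrite /wpos; case: ifPn => [r1|].
  have a1 : 0 <= (1:R) <= lmax by rewrite ler01 ltW.
  rewrite mulr0 subr0; apply: (tangent lmax F 1 (F1 1) r Hc a1 (HF _ a1)).
  by apply/andP; split.
rewrite -ltNge => r1.
have [rd|rd] := lerP r (1 + del).
  have e : 1 + (r - 1) = r by rewrite addrC subrK.
  have := Hcc (r - 1); rewrite e => h.
  have r10 : 0 < r - 1 by rewrite subr_gt0.
  have {}h := h r10 ltac:(by rewrite lerBlDl).
  have : k * (r - 1) ^+ 2 <= K0 * (r - 1) ^+ 2 by rewrite ler_pM2r // exprn_gt0.
  move: h; rewrite /K0; clear.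
  set X := (r - 1) ^+ 2; lra.
have h2 : F (1 + del) <= F 1 + F1 1 * del - K0 * del ^+ 2.
  have h := Hcc del del0 (lexx _); rewrite /K0; move: h; set X := del ^+ 2; lra.
have h5 := step_d lmax F F1 K0 del r Hc K00 del0 rd rl h2.
have r10 : 0 < r - 1 by lra.
have h6 : k * (r - 1) ^+ 2 <= K0 * del * (r - 1).
  have q1 : (r - 1) / (lmax - 1) <= 1.
    by rewrite ler_pdivrMr ?subr_gt0 // mul1r lerD2r.
  have E : k * (r - 1) ^+ 2 = (K0 * del * (r - 1)) * ((r - 1) / (lmax - 1)).
    by rewrite /k; field; rewrite subr_eq0 gt_eqF.
  rewrite E -[X in _ <= X]mulr1; apply: ler_wpM2l q1.
  apply: ltW; apply: mulr_gt0 => //; exact: mulr_gt0.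
move: h5 h6; clear; set X := (r - 1) ^+ 2; lra.
Qed.
End H.

Section H2.
Variable R : realType.

Lemma ser_ge (u : nat -> R) N : (forall i, 0 <= u i) ->
  ((\sum_(0 <= i < N) u i)%:E <= \sum_(0 <= i <oo) (u i)%:E)%E.
Proof.
move=> u0; rewrite -sumEFin; apply: nneseries_lim_ge => n _ _.
by rewrite lee_fin.
Qed.

Lemma ser_le (u : nat -> R) b : (forall i, 0 <= u i) ->
  (forall N, \sum_(0 <= i < N) u i <= b) ->
  (\sum_(0 <= i <oo) (u i)%:E <= b%:E)%E.
Proof.
move=> u0 H.
have nd := @ereal_nondecreasing_series R (fun i => (u i)%:E) xpredT 0
   (fun n _ _ => u0 n : (0 <= (u n)%:E)%E).
rewrite (cvg_lim _ (ereal_nondecreasing_cvgn nd)) //.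
apply: ge_ereal_sup => _ [n _ <-].
by rewrite /= sumEFin lee_fin.
Qed.

Lemma ser_ex (u : nat -> R) b : (forall i, 0 <= u i) ->
  (b%:E < \sum_(0 <= i <oo) (u i)%:E)%E ->
  exists N, b < \sum_(0 <= i < N) u i.
Proof.
move=> u0 H; apply: contrapT => H2.
have : (\sum_(0 <= i <oo) (u i)%:E <= b%:E)%E.
  apply: ser_le => // N; rewrite leNgt; apply/negP => h; apply: H2; by exists N.
by rewrite leNgt H.
Qed.

Lemma psum_mono (u : nat -> R) m n : (forall i, 0 <= u i) -> (m <= n)%N ->
  \sum_(0 <= i < m) u i <= \sum_(0 <= i < n) u i.
Proof.
move=> u0 mn; rewrite (big_cat_nat (leq0n m) mn) /= lerDl.
by apply: sumr_ge0 => i _.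
Qed.

Lemma stat_rec (lam pi : nat -> R) : stationary lam pi -> forall i, pi i.+1 = pi i * lam i.
Proof.
case=> _ _ _ bal; elim=> [|i IH].
  by have := bal 0%N; rewrite /= addr0 add0r => ->.
have := bal i.+1; rewrite /= IH => h.
have : pi i * lam i * lam i.+1 + pi i * lam i = pi i * lam i + pi i.+2.
  by rewrite -h mulrDr mulr1.
move=> h2; apply: (addIr (pi i * lam i)).
by rewrite h2 addrC.
Qed.

Lemma wpos_ge0 (r : R) : 0 <= wpos R r.
Proof. by rewrite /wpos; case: ifP => _ //; exact: sqr_ge0. Qed.

Lemma core (lmax : R) (F : R -> R) (a k eps : R) (lam pi : nat -> R) :
  0 < a -> 0 < k -> 0 < eps -> 0 <= F 1 ->
  (forall r, 0 <= r <= lmax -> F r <= F 1 + a * (r - 1) - k * wpos R r) ->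
  (forall r, 0 <= r <= lmax -> 0 <= F r) ->
  policy lmax lam -> stationary lam pi ->
  ((F 1)%:E <= Fstar lmax F)%E ->
  (regret lmax F lam pi <= eps%:E)%E ->
  forall M, a * pi 0%N + k * \sum_(0 <= i < M) (pi i * wpos R (lam i)) <= eps.
Proof.
move=> a0 k0 eps0 F10 Hq F0 pol st Fs reg.
have pi0 : forall i, 0 <= pi i by case: st.
have rec := stat_rec _ _ st.
have g0 : forall i, 0 <= pi i * F (lam i) by move=> i; rewrite mulr_ge0 // F0 // pol.
have s0 : forall i, 0 <= pi i * wpos R (lam i) by move=> i; rewrite mulr_ge0 // wpos_ge0.
pose G N := \sum_(0 <= i < N) pi i * F (lam i).
pose P N := \sum_(0 <= i < N) pi i.
pose S N := \sum_(0 <= i < N) pi i * wpos R (lam i).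
have tele : forall N, G N <= F 1 * P N + a * (pi N - pi 0%N) - k * S N.
  move=> N.
  have -> : F 1 * P N + a * (pi N - pi 0%N) - k * S N =
     \sum_(0 <= i < N) (F 1 * pi i + a * (pi i.+1 - pi i) - k * (pi i * wpos R (lam i))).
    rewrite sumrB big_split /= -!mulr_sumr telescope_sumr //.
  apply: ler_sum => i _.
  have := ler_wpM2l (pi0 i) (Hq (lam i) (pol i)).
  rewrite rec => h; apply: (le_trans h); rewrite le_eqVlt; apply/orP; left; apply/eqP; ring.
have sum1 : (\sum_(0 <= i <oo) (pi i)%:E = 1%:E)%E by case: st.
have P1 : forall N, P N <= 1.
  by move=> N; rewrite -lee_fin -sum1; apply: ser_ge.
have P2 : forall t, 0 < t -> exists N, 1 - t < P N.
  move=> t t0; apply: ser_ex => //; rewrite sum1 lte_fin; lra.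
have piN : forall t, 0 < t -> exists N0, forall N, (N0 <= N)%N -> pi N <= t.
  move=> t t0; have [N0 HN0] := P2 t t0; exists N0 => N NN.
  have h1 := P1 N.+1.
  have h2 : P N0 + pi N <= P N.+1.
    by rewrite /P big_nat_recr //= lerD2r; apply: psum_mono.
  lra.
have GE : ((F 1 - eps)%:E <= \sum_(0 <= i <oo) (pi i * F (lam i))%:E)%E.
  move: reg; rewrite /regret.
  have := ser_ge _ 0%N g0; rewrite big_geq // => Gge0.
  move: Gge0; case: (\sum_(0 <= i <oo) (pi i * F (lam i))%:E)%E => [g| |] //; last by move=> _ _; rewrite leey.
  rewrite lee_fin => g0' h.
  have : ((F 1)%:E - g%:E <= eps%:E)%E.
    by apply: le_trans h; apply: leeB.
  rewrite -EFinB lee_fin => h2; rewrite lee_fin; lra.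
have G2 : forall t, 0 < t -> exists N, F 1 - eps - t < G N.
  move=> t t0; apply: ser_ex => //; apply: lt_le_trans GE; rewrite lte_fin; lra.
move=> M; apply/unstable.ler_gtP => z zeps.
pose t := (z - eps) / (1 + a).
have t0 : 0 < t by rewrite /t divr_gt0 //; lra.
have et : t * (1 + a) = z - eps by rewrite /t divfK // gt_eqF //; lra.
have [N0 HN0] := piN t t0.
have [N1 HN1] := G2 t t0.
pose N := maxn M (maxn N0 N1).
have hG : G N1 <= G N by apply: psum_mono => //; rewrite /N !leq_max leqnn !orbT.
have hS : S M <= S N by apply: psum_mono => //; rewrite /N !leq_max leqnn.
have hpi : pi N <= t by apply: HN0; rewrite /N !leq_max leqnn !orbT.
have hP := P1 N.
have tN := tele N.
have m1 : F 1 * P N <= F 1 by rewrite -[leRHS]mulr1 ler_wpM2l.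
have m2 : a * pi N <= a * t by rewrite ler_wpM2l // ltW.
have m3 : k * S M <= k * S N by rewrite ler_wpM2l // ltW.
move: HN1 hG tN m1 m2 m3 et; clear -a0.
rewrite -/(G N) -/(S M) -/(S N).
move=> *; nra.
Qed.

Lemma pi_bound (lam pi : nat -> R) (a k eps : R) :
  stationary lam pi -> 0 < a -> 0 < k -> 0 < eps -> eps <= 1 ->
  (forall M, a * pi 0%N + k * \sum_(0 <= i < M) (pi i * wpos R (lam i)) <= eps) ->
  forall i, pi i <= Num.sqrt eps * (1 / a + (1 + 1 / k) / 2).
Proof.
move=> st a0 k0 e0 e1 H i.
have pi0 : forall j, 0 <= pi j by case: st.
have rec := stat_rec _ _ st.
have sum1 : (\sum_(0 <= i <oo) (pi i)%:E = 1%:E)%E by case: st.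
have P1 : \sum_(0 <= j < i) pi j <= 1.
  by rewrite -lee_fin -sum1; apply: ser_ge.
pose s := Num.sqrt eps.
have s0 : 0 < s by rewrite /s sqrtr_gt0.
have ss : s ^+ 2 = eps by rewrite /s sqr_sqrtr // ltW.
have s1 : s <= 1 by nra.
pose S := \sum_(0 <= j < i) pi j * wpos R (lam j).
have S0 : 0 <= S by apply: sumr_ge0 => j _; rewrite mulr_ge0 // wpos_ge0.
have HS := H i; rewrite -/S in HS.
have pw : forall j, pi j.+1 - pi j <= pi j * (s / 2) + (pi j * wpos R (lam j)) / (2 * s).
  move=> j; rewrite rec.
  have : lam j - 1 <= s / 2 + wpos R (lam j) / (2 * s).
    rewrite /wpos; case: ifPn => [l1|].
      rewrite mul0r addr0; have : 0 < s / 2 by rewrite divr_gt0.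
      rewrite -subr_le0 in l1; lra.
    move=> _; set x := lam j - 1.
    have E : s / 2 + x ^+ 2 / (2 * s) - x = (x - s) ^+ 2 / (2 * s).
      by field; rewrite gt_eqF.
    rewrite -subr_ge0 E; apply: divr_ge0; first exact: sqr_ge0.
    by apply: ltW; rewrite mulr_gt0.
  move=> h; have := ler_wpM2l (pi0 j) h.
  have E1 : pi j * lam j - pi j = pi j * (lam j - 1) by ring.
  have E2 : pi j * (s / 2) + pi j * wpos R (lam j) / (2 * s) = pi j * (s / 2 + wpos R (lam j) / (2 * s)) by ring.
  by rewrite E1 E2.
have T : pi i - pi 0%N <= s / 2 * \sum_(0 <= j < i) pi j + S / (2 * s).
  rewrite -telescope_sumr // /S mulr_sumr mulr_suml -big_split /=.
  by apply: ler_sum => j _; rewrite mulrC.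
have T1 : s / 2 * \sum_(0 <= j < i) pi j <= s / 2 by rewrite -[leRHS]mulr1 ler_wpM2l // divr_ge0 // ltW.
have T2 : S / (2 * s) <= s / (2 * k).
  rewrite ler_pdivrMr ?mulr_gt0 //.
  have : S <= s ^+ 2 / k by rewrite ler_pdivlMr // mulrC ss; have := pi0 0%N; nra.
  move=> h; apply: (le_trans h); rewrite le_eqVlt; apply/orP; left; apply/eqP.
  by field; rewrite gt_eqF.
have T3 : pi 0%N <= s / a.
  rewrite ler_pdivlMr //.
  have : a * pi 0%N <= s ^+ 2 by rewrite ss; have := pi0 0%N; nra.
  by nra.
have E : s * (1 / a + (1 + 1 / k) / 2) = s / a + s / 2 + s / (2 * k).
  by field; rewrite !gt_eqF.
rewrite E; lra.
Qed.

Lemma count (pi : nat -> R) (m : R) : 0 < m -> m <= 1 / 8 ->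
  (forall i, 0 <= pi i) -> (forall i, pi i <= m) ->
  (forall t, 0 < t -> exists N, 1 - t < \sum_(0 <= i < N) pi i) ->
  exists N', 1 / (16 * m) <= \sum_(0 <= i < N') pi i * i%:R.
Proof.
move=> m0 m8 pi0 pim P2.
pose x := 1 / (4 * m).
have x2 : 2 <= x by rewrite /x ler_pdivlMr ?mulr_gt0 //; lra.
pose N := Num.trunc x.
have /andP[Nx xN] := truncn_itv (le_trans (ler0n _ 2) x2).
rewrite -/N in Nx xN.
have [N2 HN2] := P2 (1 / 4) ltac:(lra).
pose N' := maxn N N2.
have NN' : (N <= N')%N by rewrite leq_maxl.
have HP : 3 / 4 < \sum_(0 <= i < N') pi i.
  apply: lt_le_trans (psum_mono _ _ _ pi0 (leq_maxr N N2)); lra.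
have PN : \sum_(0 <= i < N) pi i <= N%:R * m.
  apply: le_trans (ler_sum _ (fun i _ => pim i)) _.
  by rewrite sumr_const_nat subn0 mulr_natl.
have Nm : N%:R * m <= 1 / 4.
  have : N%:R * m <= x * m by rewrite ler_pM2r.
  have -> : x * m = 1 / 4 by rewrite /x; field; rewrite gt_eqF.
  done.
have split1 : \sum_(0 <= i < N') pi i = \sum_(0 <= i < N) pi i + \sum_(N <= i < N') pi i.
  by rewrite (big_cat_nat (leq0n N) NN').
have split2 : \sum_(0 <= i < N') pi i * i%:R =
   \sum_(0 <= i < N) pi i * i%:R + \sum_(N <= i < N') pi i * i%:R.
  by rewrite (big_cat_nat (leq0n N) NN').
have L1 : 0 <= \sum_(0 <= i < N) pi i * i%:R by apply: sumr_ge0 => i _; rewrite mulr_ge0.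
have L2 : N%:R * \sum_(N <= i < N') pi i <= \sum_(N <= i < N') pi i * i%:R.
  rewrite mulr_sumr; apply: ler_sum_nat => i /andP[Ni _].
  by rewrite mulrC ler_wpM2l // ler_nat.
set Q := \sum_(N <= i < N') pi i in split1 L2.
have Q2 : 1 / 2 <= Q by lra.
have L3 : N%:R * (1 / 2) <= N%:R * Q by rewrite ler_wpM2l.
have L4 : 1 / (16 * m) <= N%:R * (1 / 2).
  have : x / 2 <= N%:R by lra.
  have -> : x / 2 = 1 / (8 * m) by rewrite /x; field; rewrite gt_eqF.
  move=> h; have -> : 1 / (16 * m) = 1 / (8 * m) * (1 / 2) by field; rewrite gt_eqF.
  by rewrite ler_pM2r.
exists N'; rewrite split2; lra.
Qed.
End H2.

Theorem proposition6p1 (R : realType) (lmax : R) (F F1 F2 F3 : R -> R) (M L : R) :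
  1 < lmax ->
  (* F : [0,lmax] -> R_+ , continuously differentiable with derivative F1 *)
  (forall x, 0 <= x <= lmax -> 0 <= F x) ->
  (forall x, 0 <= x <= lmax -> has_deriv_within (Icc0 lmax) F x (F1 x)) ->
  {within (Icc0 lmax), continuous F1} ->
  strictly_concave_on (Icc0 lmax) F ->
  F 0 = 0 ->
  (forall x, 0 <= x < 1 -> ((F x)%:E < Fstar lmax F)%E) ->
  0 < F1 1 ->
  (* F thrice continuously differentiable on (1, lmax] *)
  (forall x, 1 < x <= lmax -> has_deriv_within (Ioc1 lmax) F1 x (F2 x)) ->
  (forall x, 1 < x <= lmax -> has_deriv_within (Ioc1 lmax) F2 x (F3 x)) ->
  {within (Ioc1 lmax), continuous F3} ->
  (* lim_{x -> 1+} F''(x) = L < 0 *)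
  F2 x @[x --> 1^'+] --> L -> L < 0 ->
  (* sup_{x > 1} |F'''(x)| <= M *)
  (forall x, 1 < x <= lmax -> `|F3 x| <= M) ->
  exists C1 eps0 : R, [/\ 0 < C1, 0 < eps0 &
    forall eps, 0 < eps <= eps0 ->
      ((C1 / Num.sqrt eps)%:E <= qstar lmax F eps)%E].
Proof.
move=> l1 F0 HF cF1 Hc _ _ a0 HF1 _ _ HL L0 _.
have [k k0 Hq] := quad_bound R lmax F F1 F2 L l1 Hc HF cF1 HF1 HL L0.
pose a := F1 1.
pose D := 1 / a + (1 + 1 / k) / 2.
have D0 : 0 < D.
  by rewrite /D addr_gt0 // ?divr_gt0 // ?addr_gt0 // ?divr_gt0.
have cF : {within Icc0 lmax, continuous F}.
  apply: deriv_cont => x; rewrite /Icc0 /= in_itv /= => Ax.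
  by exists (F1 x); apply: HF.
have Fs := Fstar_ge R lmax F (ltW l1) cF.
have a1 : 0 <= (1:R) <= lmax by rewrite ler01 ltW.
have F10 := F0 1 a1.
exists (1 / (16 * D)), (Num.min 1 ((1 / (8 * D)) ^+ 2)).
split.
- by rewrite divr_gt0 // mulr_gt0.
- by rewrite lt_min ltr01 exprn_gt0 // divr_gt0 // mulr_gt0.
move=> eps /andP[e0 ee].
have e1 : eps <= 1.
  by rewrite le_min in ee; case/andP: ee.
apply: le_ereal_inf_tmp => _ [pi [lam [pol stab st reg]] <-].
have HM := core R lmax F a k eps lam pi a0 k0 e0 F10 Hq F0 pol st Fs reg.
have PB := pi_bound R lam pi a k eps st a0 k0 e0 e1 HM.
have pi0 : forall j, 0 <= pi j by case: st.
have sum1 : (\sum_(0 <= i <oo) (pi i)%:E = 1%:E)%E by case: st.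
have P2 : forall t, 0 < t -> exists N, 1 - t < \sum_(0 <= i < N) pi i.
  move=> t t0; apply: ser_ex => //; rewrite sum1 lte_fin; lra.
pose s := Num.sqrt eps.
have s0 : 0 < s by rewrite /s sqrtr_gt0.
have ss : s ^+ 2 = eps by rewrite /s sqr_sqrtr // ltW.
pose m := s * D.
have m0 : 0 < m by rewrite mulr_gt0.
have m8 : m <= 1 / 8.
  have e2 : eps <= (1 / (8 * D)) ^+ 2 by rewrite le_min in ee; case/andP: ee.
  have c0 : 0 < 1 / (8 * D) by rewrite divr_gt0 // mulr_gt0.
  have sc : s <= 1 / (8 * D).
    rewrite -ss in e2; move: e2 c0 s0; clear; set c := 1 / (8 * D); nra.
  rewrite /m -(ler_pM2r D0) in sc.
  apply: (le_trans sc); rewrite le_eqVlt; apply/orP; left; apply/eqP.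
  by field; rewrite gt_eqF.
have [N' HN'] := count R pi m m0 m8 pi0 PB P2.
rewrite /mean_queue.
apply: le_trans (ser_ge R _ N' _); last by move=> i; rewrite mulr_ge0.
rewrite lee_fin; apply: le_trans HN'.
rewrite le_eqVlt; apply/orP; left; apply/eqP.
rewrite /m -/s; field; rewrite !gt_eqF //.
Qed.
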